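(* Let $\Pi\subset\mathbb R^2$ be a convex polygon with vertex set $V=\{\mathbf v_1,\dots,\mathbf v_n\}$ ($n\ge3$, counterclockwise, all extreme points), and let $\delta$ be a chordal decomposition of $\Pi$. Define $\kappa\colon\Pi\times V\to\mathbb R$ by $$\langle a|v\rangle_\kappa=\frac1{2n}\sum_{g\in D_n}\langle a|v\rangle_{\delta g}.$$ Then $\kappa$ is a coordinate system on $\Pi$: for every $a\in\Pi$ the values $\langle a|v\rangle_\kappa$ lie in $[0,1]$ and $a=\sum_{v\in V}\langle a|v\rangle_\kappa\,v$ is a convex combination.
   Context: A chord is a segment joining two non-adjacent vertices of $\Pi$. A chordal decomposition $\delta$ is a set of $n-3$ pairwise non-crossing chords; they decompose $\Pi$ into $n-2$ closed triangles with vertices among $V$, forming the set $T_\delta$. For a triangle $\tau$ with counterclockwise vertices $u_0,u_1,u_2$ (indices mod 3), $\langle x|u_i\rangle_\tau=A(u_{i-1},x,u_{i+1})/A(u_0,u_1,u_2)$, with $A(\mathbf p,\mathbf q,\mathbf r)=\tfrac12\det[\mathbf q-\mathbf p,\mathbf r-\mathbf p]$. Chordal coordinates: for a vertex $v$, let $\tau_1,\dots,\tau_r$ enumerate the triangles of $T_\delta$ containing $v$; $F_0=0$, $F_k=F_{k-1}+\mathds 1_{\tau_k}\langle\cdot|v\rangle_{\tau_k}-\mathds 1_{\tau_k\cap(\tau_1\cup\dots\cup\tau_{k-1})}\langle\cdot|v\rangle_{\tau_k}$, and $\langle a|v\rangle_\delta=F_r(a)$ ($\mathds 1_X$ the indicator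 of $X$). The dihedral group $D_n$ of order $2n$ is the automorphism group of the cycle graph on $\{1,\dots,n\}$ (generated by $i\mapsto i+1$ and $i\mapsto -i$ modulo $n$); it acts on chords by $\{\mathbf v_i,\mathbf v_j\}\mapsto\{\mathbf v_{ig},\mathbf v_{jg}\}$ (the vertex positions being fixed), and $\delta g$ denotes the image chordal decomposition. *)

(* Defs.v *)
From HB Require Import structures.
From mathcomp Require Import all_boot all_order all_algebra all_fingroup.
Set Implicit Arguments. Unset Strict Implicit. Unset Printing Implicit Defensive.
Import Order.TTheory GRing.Theory Num.Theory.
Local Open Scope ring_scope.

Section Chordal.
Variable R : realFieldType.
Variable n : nat.
(* vertex positions v_1..v_n, indexed by 'I_n in counterclockwise order *)
Variable V : 'I_n -> 'rV[R]_2.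

Definition area (p q r : 'rV[R]_2) : R := \det (col_mx (q - p) (r - p)) / 2.

Definition in_polygon (a : 'rV[R]_2) : Prop :=
  exists w : 'I_n -> R, (forall i, 0 <= w i) /\ \sum_i w i = 1 /\
    a = \sum_i w i *: V i.

(* counterclockwise, all vertices extreme points *)
Definition ccw_strictly_convex : Prop :=
  forall i j k : 'I_n, (i < j < k)%N -> 0 < area (V i) (V j) (V k).

Definition adj (i j : 'I_n) : bool :=
  ((i.+1 %% n)%N == j) || ((j.+1 %% n)%N == i).

Definition is_chord (c : {set 'I_n}) : bool :=
  [exists i, exists j, (c == [set i; j]) && (i != j) && ~~ adj i j].

Definition crossing (c d : {set 'I_n}) : bool :=
  [exists i, exists j, exists k, exists l,
     [&& c == [set i; j], d == [set k; l] & (i < k < j)%N && (j < l)%N]].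

Definition chordal_decomposition (delta : {set {set 'I_n}}) : Prop :=
  [/\ forall c, c \in delta -> is_chord c,
      #|delta| = (n - 3)%N &
      forall c d, c \in delta -> d \in delta -> ~~ crossing c d].

(* triangles, as index triples (i,j,k) with i<j<k, i.e. counterclockwise *)
Definition tri := ('I_n * 'I_n * 'I_n)%type.

Definition side (delta : {set {set 'I_n}}) (x y : 'I_n) : bool :=
  adj x y || ([set x; y] \in delta).

Definition is_triangle (delta : {set {set 'I_n}}) (t : tri) : bool :=
  let: (i, j, k) := t in
  [&& (i < j < k)%N, side delta i j, side delta j k & side delta i k].

Definition triangles (delta : {set {set 'I_n}}) : seq tri :=
  [seq t <- enum {: tri} | is_triangle delta t].

Definition tri_has (t : tri) (v : 'I_n) : bool :=
  let: (i, j, k) := t in [|| v == i, v == j | v == k].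

(* barycentric coordinate <x|v>_t, with counterclockwise vertices u0,u1,u2 = v_i,v_j,v_k *)
Definition bary (t : tri) (v : 'I_n) (x : 'rV[R]_2) : R :=
  let: (i, j, k) := t in
  let D := area (V i) (V j) (V k) in
  if v == i then area (V k) x (V j) / D
  else if v == j then area (V i) x (V k) / D
  else if v == k then area (V j) x (V i) / D
  else 0.

Definition in_tri (t : tri) (x : 'rV[R]_2) : bool :=
  let: (i, j, k) := t in
  [&& 0 <= bary t i x, 0 <= bary t j x & 0 <= bary t k x].

(* F_k = F_{k-1} + 1_{tau_k} <.|v>_{tau_k} - 1_{tau_k cap (tau_1 cup ... cup tau_{k-1})} <.|v>_{tau_k};
   Fsum prev s a v computes the increments contributed by the remaining triangles s,
   where prev = [tau_1; ...; tau_{k-1}] are those already processed. *)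
Fixpoint Fsum (prev s : seq tri) (v : 'I_n) (a : 'rV[R]_2) : R :=
  match s with
  | [::] => 0
  | t :: s' =>
      ((if in_tri t a then bary t v a else 0)
       - (if in_tri t a && has (fun t' => in_tri t' a) prev
          then bary t v a else 0))
      + Fsum (rcons prev t) s' v a
  end.

(* chordal coordinate <a|v>_delta = F_r(a), with tau_1..tau_r the triangles of
   T_delta containing v, in the canonical enumeration order *)
Definition chordal_coord (delta : {set {set 'I_n}}) (a : 'rV[R]_2) (v : 'I_n) : R :=
  Fsum [::] [seq t <- triangles delta | tri_has t v] v a.

(* the dihedral group D_n: automorphisms of the cycle graph on 'I_n *)
Definition dihedral : {set {perm 'I_n}} :=
  [set g : {perm 'I_n} | [forall i, forall j, adj i j == adj (g i) (g j)]].

Definition act_decomp (delta : {set {set 'I_n}}) (g : {perm 'I_n}) : {set {set 'I_n}} :=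
  [set [set g x | x in c] | c : {set 'I_n} in delta].

Definition kappa (delta : {set {set 'I_n}}) (a : 'rV[R]_2) (v : 'I_n) : R :=
  (2 * n)%:R^-1 * \sum_(g in dihedral) chordal_coord (act_decomp delta g) a v.
End Chordal.

(* Main.v *)
Require Import Defs.
From HB Require Import structures.
From mathcomp Require Import all_boot all_order all_algebra all_fingroup.
From mathcomp Require Import zify ring lra.
Set Implicit Arguments. Unset Strict Implicit. Unset Printing Implicit Defensive.
Import Order.TTheory GRing.Theory Num.Theory.
Local Open Scope ring_scope.

Section Geo.
Variable R : realFieldType.
Definition c0 (x : 'rV[R]_2) := x 0 0.
Definition c1 (x : 'rV[R]_2) := x 0 1.
Implicit Types p q r x A B C P Q : 'rV[R]_2.

Lemma areaE (p q r : 'rV[R]_2) : area p q r =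
  ((c0 q - c0 p) * (c1 r - c1 p) - (c1 q - c1 p) * (c0 r - c0 p)) / 2.
Proof.
rewrite /area (expand_det_row _ 0) !big_ord_recl big_ord0 /cofactor /=.
rewrite !det_mx11 /c0 /c1 !mxE /=.
have s0 : split (0 : 'I_(1+1)) = inl ord0.
  have -> : (0 : 'I_(1+1)) = lshift 1 (ord0 : 'I_1) by apply/val_inj.
  by rewrite (unsplitK (inl _ _)).
have s1 : split (lift (0 : 'I_(1+1)) 0) = inr ord0.
  have -> : (lift (0 : 'I_(1+1)) 0) = rshift 1 (ord0 : 'I_1) by apply/val_inj.
  by rewrite (unsplitK (inr _ _)).
rewrite s0 s1 !mxE.
have -> : lift ord0 (0 : 'I_1) = 1 :> 'I_2 by apply/val_inj.
rewrite /=.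
rewrite expr0 /bump /= expr1.
have -> : lift (1:'I_2) (0:'I_1) = 0 by apply/val_inj.
have E0 : (ord0 : 'I_2) = 0 by apply/val_inj.
rewrite ?E0; congr (_ / _); ring.
Qed.

Lemma c0D (x y : 'rV[R]_2) : c0 (x + y) = c0 x + c0 y. Proof. by rewrite /c0 mxE. Qed.
Lemma c1D (x y : 'rV[R]_2) : c1 (x + y) = c1 x + c1 y. Proof. by rewrite /c1 mxE. Qed.
Lemma c0Z a (x : 'rV[R]_2) : c0 (a *: x) = a * c0 x. Proof. by rewrite /c0 mxE. Qed.
Lemma c1Z a (x : 'rV[R]_2) : c1 (a *: x) = a * c1 x. Proof. by rewrite /c1 mxE. Qed.
Lemma c0S (I : finType) (w : I -> R) (X : I -> 'rV[R]_2) :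
  c0 (\sum_i w i *: X i) = \sum_i w i * c0 (X i).
Proof. by rewrite /c0 summxE; apply: eq_bigr => i _; rewrite mxE. Qed.
Lemma c1S (I : finType) (w : I -> R) (X : I -> 'rV[R]_2) :
  c1 (\sum_i w i *: X i) = \sum_i w i * c1 (X i).
Proof. by rewrite /c1 summxE; apply: eq_bigr => i _; rewrite mxE. Qed.

Lemma rowv2P (x y : 'rV[R]_2) : c0 x = c0 y -> c1 x = c1 y -> x = y.
Proof.
move=> h0 h1; apply/rowP => i.
have [->|->] : i = 0 \/ i = 1 by case: i => [[|[|//]]] Hi; [left|right]; apply/val_inj.
  exact: h0.
exact: h1.
Qed.

Lemma area_cyc p q r : area p q r = area q r p.
Proof. by rewrite !areaE; field. Qed.
Lemma area_swap p q r : area q p r = - area p q r.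
Proof. by rewrite !areaE; field. Qed.
Lemma area_pp p r : area p p r = 0.
Proof. by rewrite !areaE; field. Qed.
Lemma area_qq p q : area p q q = 0.
Proof. by rewrite !areaE; field. Qed.
Lemma area_qp p q : area p q p = 0.
Proof. by rewrite !areaE; field. Qed.

Lemma area_comb3 p q (x1 x2 x3 : 'rV[R]_2) b1 b2 b3 : b1 + b2 + b3 = 1 ->
  area p q (b1 *: x1 + b2 *: x2 + b3 *: x3) =
  b1 * area p q x1 + b2 * area p q x2 + b3 * area p q x3.
Proof.
move=> hb; have -> : b3 = 1 - b1 - b2 by rewrite -hb; ring.
by rewrite !areaE !c0D !c1D !c0Z !c1Z; field.
Qed.

Lemma area_combS (I : finType) (w : I -> R) (X : I -> 'rV[R]_2) p q :
  \sum_i w i = 1 ->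
  area p q (\sum_i w i *: X i) = \sum_i w i * area p q (X i).
Proof.
move=> hw; rewrite areaE c0S c1S.
set a0 := c0 q - c0 p; set a1 := c1 q - c1 p.
have -> : \sum_i w i * area p q (X i) =
  \sum_i ((a0/2) * (w i * c1 (X i)) - (a1/2) * (w i * c0 (X i)) + ((a1 * c0 p - a0 * c1 p)/2) * w i).
  by apply: eq_bigr => i _; rewrite areaE -/a0 -/a1; field.
rewrite !big_split /= -!mulr_sumr hw sumrN -mulr_sumr; by field.
Qed.

Lemma bsum A B C x : area C x B + area A x C + area B x A = area A B C.
Proof. by rewrite !areaE; field. Qed.

Lemma brep A B C x : area C x B *: A + area A x C *: B + area B x A *: C = area A B C *: x.
Proof.
apply: rowv2P; rewrite ?c0D ?c1D ?c0Z ?c1Z !areaE; by field.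
Qed.

Lemma bf A B C x P Q : area A B C * area P Q x =
  area C x B * area P Q A + area A x C * area P Q B + area B x A * area P Q C.
Proof. by rewrite !areaE; field. Qed.

Lemma area_mid_comb3 p q (x1 x2 x3 : 'rV[R]_2) b1 b2 b3 : b1 + b2 + b3 = 1 ->
  area p (b1 *: x1 + b2 *: x2 + b3 *: x3) q =
  b1 * area p x1 q + b2 * area p x2 q + b3 * area p x3 q.
Proof.
move=> hb; rewrite -!(area_cyc q) area_comb3 //.
Qed.

Lemma core A B C (A' B' C' : 'rV[R]_2) x P Q :
  0 < area A B C -> 0 < area A' B' C' ->
  0 <= area C x B -> 0 <= area A x C -> 0 <= area B x A ->
  0 <= area C' x B' -> 0 <= area A' x C' -> 0 <= area B' x A' ->
  0 <= area P Q A -> 0 <= area P Q B -> 0 <= area P Q C ->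
  area P Q A' <= 0 -> area P Q B' <= 0 -> area P Q C' <= 0 ->
  [/\ area C' x B' * area P Q A' = 0, area A' x C' * area P Q B' = 0 &
      area B' x A' * area P Q C' = 0].
Proof.
move=> D D' b1 b2 b3 b1' b2' b3' f1 f2 f3 f1' f2' f3'.
have e := bf A B C x P Q; have e' := bf A' B' C' x P Q.
have t1 : 0 <= area C x B * area P Q A by apply: mulr_ge0.
have t2 : 0 <= area A x C * area P Q B by apply: mulr_ge0.
have t3 : 0 <= area B x A * area P Q C by apply: mulr_ge0.
have s1 : area C' x B' * area P Q A' <= 0 by apply: mulr_ge0_le0.
have s2 : area A' x C' * area P Q B' <= 0 by apply: mulr_ge0_le0.
have s3 : area B' x A' * area P Q C' <= 0 by apply: mulr_ge0_le0.
have fx0 : 0 <= area P Q x.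
  have : 0 <= area A B C * area P Q x by rewrite e; lra.
  by rewrite pmulr_rge0.
have fx1 : area P Q x <= 0.
  have : area A' B' C' * area P Q x <= 0 by rewrite e'; lra.
  by rewrite pmulr_rle0.
have fx : area P Q x = 0 by apply/eqP; rewrite eq_le fx1 fx0.
rewrite fx mulr0 in e'.
split; lra.
Qed.
End Geo.

Section Idx.
Variable R : realFieldType.
Variable n : nat.
Variable V : 'I_n -> 'rV[R]_2.
Implicit Types (i j k v w : 'I_n) (x : 'rV[R]_2).

Lemma sum_deltaR (F : 'I_n -> R) i : \sum_v (v == i)%:R * F v = F i.
Proof.
rewrite (bigD1 i) //= eqxx mul1r big1 ?addr0 // => v /negbTE ->; by rewrite mul0r.
Qed.
Lemma sum_deltaV (F : 'I_n -> 'rV[R]_2) i : \sum_v (v == i)%:R *: F v = F i.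
Proof.
rewrite (bigD1 i) //= eqxx scale1r big1 ?addr0 // => v /negbTE ->; by rewrite scale0r.
Qed.

Lemma sum_deltaV' (F : 'I_n -> 'rV[R]_2) (c : R) i : \sum_v ((v == i)%:R * c) *: F v = c *: F i.
Proof.
rewrite (bigD1 i) //= eqxx mul1r big1 ?addr0 // => v /negbTE ->; by rewrite mul0r scale0r.
Qed.

Lemma bary_split i j k v x : i != j -> j != k -> i != k ->
  bary V (i, j, k) v x =
  (v == i)%:R * (area (V k) x (V j) / area (V i) (V j) (V k)) +
  (v == j)%:R * (area (V i) x (V k) / area (V i) (V j) (V k)) +
  (v == k)%:R * (area (V j) x (V i) / area (V i) (V j) (V k)).
Proof.
move=> hij hjk hik; rewrite /bary.
have [->|hvi] := eqVneq v i.
  by rewrite (negbTE hij) (negbTE hik) /=; ring.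
have [->|hvj] := eqVneq v j.
  by rewrite (negbTE hjk) /=; ring.
by case: (v == k); rewrite /=; ring.
Qed.

Lemma bary_i i j k x : i != j -> j != k -> i != k ->
  bary V (i, j, k) i x = area (V k) x (V j) / area (V i) (V j) (V k).
Proof. by move=> *; rewrite /bary eqxx. Qed.

Section Tri.
Variables i j k : 'I_n.
Hypotheses (hij : i != j) (hjk : j != k) (hik : i != k).
Hypothesis hD : area (V i) (V j) (V k) != 0.
Local Notation D := (area (V i) (V j) (V k)).

Lemma b3_sum x : area (V k) x (V j) / D + area (V i) x (V k) / D + area (V j) x (V i) / D = 1.
Proof. by rewrite -[RHS](divff hD) -(bsum (V i) (V j) (V k) x) !mulrDl. Qed.

Lemma b3_rep x : (area (V k) x (V j) / D) *: V i + (area (V i) x (V k) / D) *: V j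
   + (area (V j) x (V i) / D) *: V k = x.
Proof.
apply: (scalerI hD); rewrite !scalerDr !scalerA -(brep (V i) (V j) (V k) x).
by rewrite !(mulrC D) !divfK.
Qed.

Lemma bary_sumV x : \sum_v bary V (i, j, k) v x = 1.
Proof.
under eq_bigr => v _ do rewrite bary_split //.
by rewrite !big_split /= !sum_deltaR b3_sum.
Qed.

Lemma bary_sumVV x : \sum_v bary V (i, j, k) v x *: V v = x.
Proof.
under eq_bigr => v _ do rewrite bary_split // !scalerDl.
by rewrite !big_split /= !sum_deltaV' b3_rep.
Qed.

Lemma bary_vert v w : w \in [:: i; j; k] -> bary V (i, j, k) v (V w) = (v == w)%:R.
Proof.
move=> hw; rewrite bary_split //.
rewrite !inE in hw; case/or3P: hw => /eqP ->.
- rewrite area_pp area_qq (area_cyc (V k)) divff //; ring.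
- rewrite area_pp area_qq divff //; ring.
- rewrite area_pp area_qq -(area_cyc (V i)) divff //; ring.
Qed.

Lemma bary_comb v (X1 X2 X3 : 'rV[R]_2) b1 b2 b3 : b1 + b2 + b3 = 1 ->
  bary V (i, j, k) v (b1 *: X1 + b2 *: X2 + b3 *: X3) =
  b1 * bary V (i, j, k) v X1 + b2 * bary V (i, j, k) v X2 + b3 * bary V (i, j, k) v X3.
Proof.
move=> hb; rewrite !bary_split // !area_mid_comb3 //; ring.
Qed.
End Tri.
End Idx.

Lemma lt_neq n (i j : 'I_n) : (i < j)%N -> i != j.
Proof. by move=> h; apply/eqP => e; rewrite e ltnn in h. Qed.

Section Sign.
Variable R : realFieldType.
Variable n : nat.
Variable V : 'I_n -> 'rV[R]_2.
Hypothesis hccw : ccw_strictly_convex V.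
Implicit Types (i j k p q v w : 'I_n) (x : 'rV[R]_2).

Lemma sgn_in p q w : (p < w < q)%N -> area (V p) (V q) (V w) < 0.
Proof.
move=> h; have := hccw h.
by rewrite -(area_cyc (V w)) area_swap oppr_gt0.
Qed.

Lemma sgn_lo p q w : (w < p < q)%N -> 0 < area (V p) (V q) (V w).
Proof. by move=> h; have := hccw h; rewrite area_cyc. Qed.

Lemma sgn_hi p q w : (p < q < w)%N -> 0 < area (V p) (V q) (V w).
Proof. by move=> h; have := hccw h. Qed.

Lemma f_le0 p q w : (p < q)%N -> (p <= w <= q)%N -> area (V p) (V q) (V w) <= 0.
Proof.
move=> hpq /andP[h1 h2].
have [->|hp] := eqVneq w p; first by rewrite area_qp.
have [->|hq] := eqVneq w q; first by rewrite area_qq.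
apply: ltW; apply: sgn_in; apply/andP; split; rewrite ltn_neqAle ?h1 ?h2 andbT.
  by rewrite eq_sym.
by [].
Qed.

Lemma f_ge0 p q w : (p < q)%N -> ((w <= p) || (q <= w))%N -> 0 <= area (V p) (V q) (V w).
Proof.
move=> hpq /orP[h|h].
  have [->|hp] := eqVneq w p; first by rewrite area_qp.
  by apply: ltW; apply: sgn_lo; rewrite hpq andbT ltn_neqAle hp h.
have [->|hq] := eqVneq w q; first by rewrite area_qq.
by apply: ltW; apply: sgn_hi; rewrite hpq /= ltn_neqAle eq_sym hq h.
Qed.

Lemma f_eq0 p q w : (p < q)%N -> area (V p) (V q) (V w) = 0 -> (w == p) || (w == q).
Proof.
move=> hpq h.
have [//|hp] := eqVneq w p.
have [//|hq] := eqVneq w q.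
exfalso.
have : [|| (w < p)%N, (p < w < q)%N | (q < w)%N].
  move: hp hq hpq; rewrite -!val_eqE /=; lia.
case/or3P => hw.
- by have := @sgn_lo p q w; rewrite hw hpq h ltxx => /(_ isT).
- by have := sgn_in hw; rewrite h ltxx.
- by have := @sgn_hi p q w; rewrite hw hpq h ltxx => /(_ isT).
Qed.
End Sign.

Lemma mem3_1 (T : eqType) (a b c : T) : a \in [:: a; b; c]. Proof. by rewrite inE eqxx. Qed.
Lemma mem3_2 (T : eqType) (a b c : T) : b \in [:: a; b; c]. Proof. by rewrite !inE eqxx orbT. Qed.
Lemma mem3_3 (T : eqType) (a b c : T) : c \in [:: a; b; c]. Proof. by rewrite !inE eqxx !orbT. Qed.

Section Consist.
Variable R : realFieldType.
Variable n : nat.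
Variable V : 'I_n -> 'rV[R]_2.
Hypothesis hccw : ccw_strictly_convex V.
Implicit Types (i j k p q v w : 'I_n) (x : 'rV[R]_2).

Lemma ord3_neq i j k : (i < j < k)%N -> [/\ i != j, j != k & i != k].
Proof.
move=> /andP[a b]; split; apply: lt_neq => //; exact: ltn_trans b.
Qed.

Lemma D_neq0 i j k : (i < j < k)%N -> area (V i) (V j) (V k) != 0.
Proof. by move=> h; rewrite gt_eqF // hccw. Qed.

Lemma in_tri_area i j k x : (i < j < k)%N -> in_tri V (i, j, k) x ->
  [/\ 0 <= area (V k) x (V j), 0 <= area (V i) x (V k) & 0 <= area (V j) x (V i)].
Proof.
move=> o; have [hij hjk hik] := ord3_neq o; have D := hccw o.
have hji : j != i by rewrite eq_sym.
have hkj : k != j by rewrite eq_sym.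
have hki : k != i by rewrite eq_sym.
rewrite /in_tri !bary_split // !eqxx ?(negbTE hij) ?(negbTE hjk) ?(negbTE hik).
rewrite ?(negbTE hji) ?(negbTE hkj) ?(negbTE hki) /=.
rewrite !mul1r !mul0r !addr0 !add0r !pmulr_lge0 ?invr_gt0 //.
by case/and3P.
Qed.

Lemma consist_f i j k i' j' k' x P Q : (i < j < k)%N -> (i' < j' < k')%N ->
  in_tri V (i, j, k) x -> in_tri V (i', j', k') x ->
  (forall y, y \in [:: i; j; k] -> 0 <= area P Q (V y)) ->
  (forall y, y \in [:: i'; j'; k'] -> area P Q (V y) <= 0 /\
                    (area P Q (V y) = 0 -> y \in [:: i; j; k])) ->
  forall v, bary V (i, j, k) v x = bary V (i', j', k') v x.
Proof.
move=> o o' t t' fpos fneg v.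
have D := hccw o; have D' := hccw o'.
have [hij hjk hik] := ord3_neq o; have [hij' hjk' hik'] := ord3_neq o'.
have [a1 a2 a3] := in_tri_area o t; have [a1' a2' a3'] := in_tri_area o' t'.
have mi : forall y, y \in [:: i; j; k] -> y \in [:: i; j; k] by [].
have [e1 e2 e3] := core D D' a1 a2 a3 a1' a2' a3'
  (fpos i (mem3_1 _ _ _)) (fpos j (mem3_2 _ _ _)) (fpos k (mem3_3 _ _ _))
  (fneg i' (mem3_1 _ _ _)).1 (fneg j' (mem3_2 _ _ _)).1 (fneg k' (mem3_3 _ _ _)).1.
have key : forall y (a : R), y \in [:: i'; j'; k'] -> a * area P Q (V y) = 0 ->
   (a / area (V i') (V j') (V k')) * bary V (i, j, k) v (V y) =
   (a / area (V i') (V j') (V k')) * (v == y)%:R.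
  move=> y a hy /eqP; rewrite mulf_eq0 => /orP[/eqP->|/eqP hf]; first by rewrite !mul0r.
  by rewrite (bary_vert hij hjk hik (D_neq0 o) v ((fneg y hy).2 hf)).
rewrite -{1}(b3_rep (D_neq0 o') x) bary_comb //; last exact: (b3_sum (D_neq0 o')).
rewrite (key i' _ (mem3_1 _ _ _) e1) (key j' _ (mem3_2 _ _ _) e2) (key k' _ (mem3_3 _ _ _) e3).
rewrite (bary_split V v x hij' hjk' hik'); ring.
Qed.

Lemma consist_in i j k i' j' k' x p q : (i < j < k)%N -> (i' < j' < k')%N ->
  in_tri V (i, j, k) x -> in_tri V (i', j', k') x -> (p < q)%N ->
  p \in [:: i; j; k] -> q \in [:: i; j; k] ->
  (forall y, y \in [:: i; j; k] -> (y <= p) || (q <= y))%N ->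
  (forall y, y \in [:: i'; j'; k'] -> (p <= y <= q))%N ->
  forall v, bary V (i, j, k) v x = bary V (i', j', k') v x.
Proof.
move=> o o' t t' hpq hp hq h1 h2.
apply: (consist_f o o' t t' (P := V p) (Q := V q)).
  by move=> y hy; apply: f_ge0 => //; apply: h1.
move=> y hy; split; first by apply: f_le0 => //; apply: h2.
by move=> /(f_eq0 hccw hpq) /orP[] /eqP ->.
Qed.

Lemma consist_out i j k i' j' k' x p q : (i < j < k)%N -> (i' < j' < k')%N ->
  in_tri V (i, j, k) x -> in_tri V (i', j', k') x -> (p < q)%N ->
  p \in [:: i; j; k] -> q \in [:: i; j; k] ->
  (forall y, y \in [:: i; j; k] -> (p <= y <= q))%N ->
  (forall y, y \in [:: i'; j'; k'] -> (y <= p) || (q <= y))%N ->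
  forall v, bary V (i, j, k) v x = bary V (i', j', k') v x.
Proof.
move=> o o' t t' hpq hp hq h1 h2.
apply: (consist_f o o' t t' (P := V q) (Q := V p)).
  by move=> y hy; rewrite area_swap oppr_ge0; apply: f_le0 => //; apply: h1.
move=> y hy; split; first by rewrite area_swap oppr_le0; apply: f_ge0 => //; apply: h2.
by rewrite area_swap => /eqP; rewrite oppr_eq0 => /eqP /(f_eq0 hccw hpq) /orP[] /eqP ->.
Qed.

End Consist.

Lemma oeqE m (i j : 'I_m) : (i == j) = (nat_of_ord i == nat_of_ord j). Proof. by []. Qed.

Lemma nL1 (a b c y : nat) : (a < b)%N -> (b < c)%N -> [|| y == a, y == b | y == c] -> ((y <= a) || (b <= y))%N.
Proof. lia. Qed.
Lemma nL2 (a b c y : nat) : (a < b)%N -> (b < c)%N -> [|| y == a, y == b | y == c] -> ((y <= b) || (c <= y))%N.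
Proof. lia. Qed.
Lemma nL3 (a b c y : nat) : (a < b)%N -> (b < c)%N -> [|| y == a, y == b | y == c] -> (a <= y <= c)%N.
Proof. lia. Qed.
Lemma nL4 (a b c w : nat) : (a < b)%N -> (b < c)%N -> w != a -> w != b -> w != c ->
  ~~ (a < w < b)%N -> ~~ (b < w < c)%N -> ((w < a) || (c < w))%N.
Proof. lia. Qed.
Lemma nL5 (a c y : nat) : ~~ (a < y < c)%N -> ((y <= a) || (c <= y))%N.
Proof. lia. Qed.
Lemma nL6 (a c y : nat) : (a < y < c)%N -> ((y < a) || (c < y))%N -> False.
Proof. lia. Qed.

Section C2.
Variable R : realFieldType.
Variable n : nat.
Variable V : 'I_n -> 'rV[R]_2.
Hypothesis hccw : ccw_strictly_convex V.
Implicit Types (i j k p q v w : 'I_n) (x : 'rV[R]_2).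
Variable sd : rel 'I_n.
Hypothesis sd_sym : symmetric sd.
Hypothesis HNC : forall p q y z, sd p q -> sd y z -> (p < y < q)%N -> ((z < p) || (q < z))%N -> False.

Lemma consist i j k i' j' k' x : (i < j < k)%N -> (i' < j' < k')%N ->
  sd i j -> sd j k -> sd i k -> sd i' j' -> sd j' k' -> sd i' k' ->
  in_tri V (i, j, k) x -> in_tri V (i', j', k') x ->
  forall v, bary V (i, j, k) v x = bary V (i', j', k') v x.
Proof.
move=> o o' sij sjk sik sij' sjk' sik' t t'.
have pairs : forall w y, w \in [:: i'; j'; k'] -> y \in [:: i'; j'; k'] -> (y == w) || sd w y.
  move=> w y; rewrite !inE => /or3P[] /eqP -> /or3P[] /eqP ->;
  rewrite ?eqxx // ?sij' ?sjk' ?sik' ?orbT // sd_sym ?sij' ?sjk' ?sik' ?orbT //.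
have mem : forall y, y \in [:: i; j; k] -> [|| y == i, y == j | y == k] by move=> y; rewrite !inE.
case: (boolP [forall y : 'I_n, (y \in [:: i'; j'; k']) ==> (y \in [:: i; j; k])]) => [/forallP hall|].
  have := hall i'; have := hall j'; have := hall k'.
  rewrite !mem3_1 !mem3_2 !mem3_3 !implyTb !inE => h3 h2 h1.
  have [e1 e2 e3] : [/\ i' = i, j' = j & k' = k].
    by move: o o' h1 h2 h3; rewrite !oeqE; split; apply/ord_inj; lia.
  by rewrite e1 e2 e3.
rewrite negb_forall => /existsP [w]; rewrite negb_imply => /andP [hw hwn].
have hw' : [/\ w != i, w != j & w != k] by move: hwn; rewrite !inE; case: (w == i); case: (w == j); case: (w == k).
case: hw' => wi wj wk.
have reg : forall p q, sd p q -> (p < w < q)%N -> forall y, y \in [:: i'; j'; k'] -> (p <= y <= q)%N.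
  move=> p q spq hpwq y hy; case/orP: (pairs w y hw hy) => [/eqP -> | swy].
    by case/andP: hpwq => a b; rewrite (ltnW a) (ltnW b).
  case: (boolP ((y < p) || (q < y))%N) => hyo; first by case: (HNC spq swy hpwq hyo).
  by move: hyo; rewrite negb_or -!leqNgt => /andP[-> ->].
case/andP: (o) => oij ojk.
have mem' : forall y, y \in [:: i; j; k] -> [|| nat_of_ord y == i, nat_of_ord y == j | nat_of_ord y == k].
  by move=> y /mem; rewrite !oeqE.
have [hwij|n1] := boolP (i < w < j)%N.
  refine (consist_in hccw o o' t t' (p := i) (q := j) _ _ _ _ _) => //; rewrite ?mem3_1 ?mem3_2 //.
    by move=> y /mem' /(nL1 oij ojk).
  exact: reg.
have [hwjk|n2] := boolP (j < w < k)%N.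
  refine (consist_in hccw o o' t t' (p := j) (q := k) _ _ _ _ _) => //; rewrite ?mem3_2 ?mem3_3 //.
    by move=> y /mem' /(nL2 oij ojk).
  exact: reg.
move: wi wj wk; rewrite !oeqE => wi wj wk.
have hout := nL4 oij ojk wi wj wk n1 n2.
refine (consist_out hccw o o' t t' (p := i) (q := k) _ _ _ _ _) => //; rewrite ?mem3_1 ?mem3_3 //.
- exact: ltn_trans ojk.
- by move=> y /mem' /(nL3 oij ojk).
move=> y hy; case: (boolP (i < y < k)%N) => hiyk; last exact: nL5.
have syw : sd y w.
  case/orP: (pairs y w hy hw) => [/eqP ew|//].
  by case: (nL6 hiyk); rewrite -ew.
by case: (HNC sik syw hiyk hout).
Qed.
End C2.

Local Close Scope ring_scope.
Section Comb.
Variable n' : nat.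
Local Notation n := n'.+3.
Implicit Types (i j k l x y z p q : 'I_n) (c d : {set 'I_n}).

Lemma adj_lt i j : (i < j)%N -> adj i j = (j == i.+1 :> nat) || ((i == 0 :> nat) && (j == n.-1 :> nat)).
Proof.
move=> h; rewrite /adj.
have hj := ltn_ord j.
rewrite (modn_small (_ : i.+1 < n)%N); last by lia.
case: (ltnP j.+1 n) => hj1.
  rewrite modn_small //; apply/idP/idP; lia.
have -> : j.+1 = n by lia.
rewrite modnn; apply/idP/idP; lia.
Qed.

Lemma adj_sym i j : adj i j = adj j i.
Proof. by rewrite /adj orbC. Qed.

Lemma set2_eq x y i j : (x < y)%N -> (i < j)%N -> [set x; y] = [set i; j] -> x = i /\ y = j.
Proof.
move=> hxy hij e.
have hx : x \in [set i; j] by rewrite -e set21.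
have hy : y \in [set i; j] by rewrite -e set22.
have hi : i \in [set x; y] by rewrite e set21.
have hj : j \in [set x; y] by rewrite e set22.
move: hx hy hi hj; rewrite !inE !oeqE => hx hy hi hj.
by split; apply/ord_inj; lia.
Qed.

Lemma set2_ord x y : x != y -> exists i j, (i < j)%N /\ [set x; y] = [set i; j] /\
   ((i == x) && (j == y) || (i == y) && (j == x)).
Proof.
move=> hxy; case: (ltngtP x y) => h.
- by exists x, y; rewrite !eqxx.
- by exists y, x; rewrite setUC !eqxx orbT.
- by move: hxy; rewrite oeqE h eqxx.
Qed.

Lemma crossingE i j k l : (i < j)%N -> (k < l)%N ->
  crossing [set i; j] [set k; l] = [&& (i < k)%N, (k < j)%N & (j < l)%N].
Proof.
move=> hij hkl; apply/idP/idP.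
  case/existsP => i1 /existsP [j1 /existsP [k1 /existsP [l1]]].
  case/and3P => /eqP e1 /eqP e2 /andP [/andP [a b] c].
  have o1 : (i1 < j1)%N by apply: ltn_trans b.
  have o2 : (k1 < l1)%N by apply: ltn_trans c.
  case: (set2_eq hij o1 e1) => -> ->; case: (set2_eq hkl o2 e2) => -> ->.
  by rewrite a b c.
case/and3P => a b c; apply/existsP; exists i; apply/existsP; exists j.
apply/existsP; exists k; apply/existsP; exists l.
by rewrite !eqxx a b c.
Qed.

Lemma side_sym (delta : {set {set 'I_n}}) : symmetric (side delta).
Proof. by move=> x y; rewrite /side adj_sym setUC. Qed.


Lemma chordP c : is_chord c -> exists x y, (x < y)%N /\ c = [set x; y] /\ ~~ adj x y.
Proof.
case/existsP => i /existsP [j] /andP [/andP [/eqP -> hij] na].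
case: (set2_ord hij) => x [y [hxy [e /orP [] /andP [/eqP ex /eqP ey]]]];
  exists x, y; rewrite e; split => //; split => //.
  by rewrite ex ey.
by rewrite ex ey adj_sym.
Qed.

Definition hi c := (\max_(x in c) (x : nat))%N.
Definition lo c := (n.-1 - \max_(x in c) (n.-1 - x))%N.

Lemma max2 (F : 'I_n -> nat) x y : x != y -> (\max_(z in [set x; y]) F z)%N = maxn (F x) (F y).
Proof.
move=> hxy; rewrite big_setU1 /= ?big_set1 // inE; exact: hxy.
Qed.

Lemma lohi2 x y : (x < y)%N -> lo [set x; y] = x /\ hi [set x; y] = y.
Proof.
move=> h; have hxy : x != y by rewrite oeqE; lia.
rewrite /lo /hi !max2 //; have := ltn_ord y; lia.
Qed.


Section Lam.
Variable F : {set {set 'I_n}}.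
Hypothesis FR : forall c, c \in F -> exists x y : 'I_n, (x.+1 < y)%N /\ c = [set x; y].
Hypothesis FN : forall c d, c \in F -> d \in F -> ~~ [&& (lo c < lo d)%N, (lo d < hi c)%N & (hi c < hi d)%N].

Lemma F_lohi c : c \in F -> ((lo c).+1 < hi c)%N && (hi c < n)%N.
Proof.
move=> /FR [x [y [h ->]]]; have [-> ->] := lohi2 (ltnW h).
by rewrite h ltn_ord.
Qed.

Lemma F_inj c d : c \in F -> d \in F -> lo c = lo d -> hi c = hi d -> c = d.
Proof.
move=> /FR [x [y [h ->]]] /FR [x' [y' [h' ->]]].
have [-> ->] := lohi2 (ltnW h); have [-> ->] := lohi2 (ltnW h').
by move=> /ord_inj -> /ord_inj ->.
Qed.

Definition Pz c z := ((lo c < z < hi c)%N) && [forall d in F,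
   ((d != c) && (lo c <= lo d)%N && (hi d <= hi c)%N) ==> ~~ (lo d < z < hi d)%N].

Lemma Pz_ex c : c \in F -> exists z, Pz c z.
Proof.
move=> cF; have /andP [c1 c2] := F_lohi cF.
pose C := [set d in F | (d != c) && (lo c <= lo d)%N && (hi d <= hi c)%N].
case: (set_0Vmem C) => [C0 | [d0 hd0]].
  have hz : ((lo c).+1 < n)%N by lia.
  exists (Ordinal hz); rewrite /Pz /=; apply/andP; split; first by lia.
  apply/forall_inP => d dF; apply/implyP => hd.
  have : d \in C by rewrite inE dF hd.
  by rewrite C0 inE.
case: (@arg_maxnP _ d0 (fun d => d \in C) (fun d => hi d - lo d)%N hd0) => d dC dmax.
move: (dC); rewrite inE => /andP [dF /andP [/andP [dc hld] hhd]].
have /andP [d1 d2] := F_lohi dF.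
case: (ltnP (lo c) (lo d)) => hlt.
  have hz : (lo d < n)%N by lia.
  exists (Ordinal hz); rewrite /Pz /=; apply/andP; split; first by lia.
  apply/forall_inP => e eF; apply/implyP => he; apply/negP => hin.
  have eC : e \in C by rewrite inE eF he.
  have := dmax e eC; have := FN eF dF; move: he hin hlt d1 hhd; rewrite /= => /andP [/andP [_ ?] ?].
  lia.
have elo : lo d = lo c by lia.
have hhd' : (hi d < hi c)%N.
  rewrite ltn_neqAle hhd andbT; apply/negP => /eqP ehi.
  by move: dc; rewrite (F_inj dF cF elo ehi) eqxx.
have hz : (hi d < n)%N by lia.
exists (Ordinal hz); rewrite /Pz /=; apply/andP; split; first by lia.
apply/forall_inP => e eF; apply/implyP => he; apply/negP => hin.
have eC : e \in C by rewrite inE eF he.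
have := dmax e eC; have := FN dF eF; move: he hin elo d1 hhd'; rewrite /= => /andP [/andP [_ ?] ?].
lia.
Qed.

Lemma Pz_inj c d z : c \in F -> d \in F -> Pz c z -> Pz d z -> c = d.
Proof.
move=> cF dF /andP [hc /forall_inP Hc] /andP [hd /forall_inP Hd].
apply/eqP; apply/negP => /negP cd.
have := FN cF dF; have := FN dF cF => n1 n2.
have /orP [sub|sub] : (((lo c <= lo d) && (hi d <= hi c)) || ((lo d <= lo c) && (hi c <= hi d)))%N
  by move: n1 n2 hc hd; lia.
  by move: (Hc d dF); rewrite eq_sym cd sub /= hd.
by move: (Hd c cF); rewrite cd sub /= hc.
Qed.


Definition u c := odflt ord0 [pick z | Pz c z].
Lemma u_P c : c \in F -> Pz c (u c).
Proof.
move=> cF; rewrite /u; case: pickP => [z hz|H] //=.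
by case: (Pz_ex cF) => z hz; rewrite H in hz.
Qed.

Lemma lam_bound : (#|F| <= n - 2)%N.
Proof.
have inj : {in F &, injective u}.
  move=> c d cF dF e; apply: (Pz_inj cF dF (u_P cF)); rewrite e; exact: u_P dF.
rewrite -(card_in_imset inj).
have h0 : (ord0 : 'I_n) != ord_max by rewrite oeqE.
have -> : (n - 2 = #|~: [set (ord0 : 'I_n); ord_max]|)%N.
  by have := cardsC [set (ord0 : 'I_n); ord_max]; rewrite cards2 h0 card_ord /=; lia.
apply: subset_leq_card; apply/subsetP => z /imsetP [c cF ->]; rewrite !inE !oeqE /=.
have := u_P cF; case/andP => h _; have := F_lohi cF; lia.
Qed.
End Lam.

Definition topc : {set 'I_n} := [set ord0; ord_max].

Lemma top_not_chord : ~~ is_chord topc.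
Proof.
apply/negP => /chordP [x [y [hxy [e na]]]].
have o : ((ord0 : 'I_n) < (ord_max : 'I_n))%N by [].
case: (set2_eq o hxy e) => ex ey.
by move: na; rewrite adj_lt // -ex -ey /= eqxx.
Qed.

Lemma chord_bound (S : {set {set 'I_n}}) : (forall c, c \in S -> is_chord c) ->
  (forall c d, c \in S -> d \in S -> ~~ crossing c d) -> (#|S| <= n - 3)%N.
Proof.
move=> Sch SNC.
pose F := topc |: S.
have FR : forall c, c \in F -> exists x y : 'I_n, (x.+1 < y)%N /\ c = [set x; y].
  move=> c; rewrite !inE => /orP [/eqP -> | /Sch /chordP [x [y [hxy [-> na]]]]].
    by exists ord0, ord_max.
  exists x, y; split => //; move: na; rewrite adj_lt //; lia.
have FN : forall c d, c \in F -> d \in F -> ~~ [&& (lo c < lo d)%N, (lo d < hi c)%N & (hi c < hi d)%N].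
  move=> c d cF dF.
  case: (FR c cF) => x [y [hxy ec]]; case: (FR d dF) => x' [y' [hxy' ed]].
  have [l1 h1] := lohi2 (ltnW hxy); have [l2 h2] := lohi2 (ltnW hxy').
  rewrite ec ed l1 h1 l2 h2.
  have o : ((ord0 : 'I_n) < (ord_max : 'I_n))%N by [].
  move: cF dF; rewrite !inE => /orP [/eqP ct | cS].
    case: (set2_eq (ltnW hxy) o (etrans (esym ec) ct)) => -> -> _ /=.
    have := ltn_ord y'; lia.
  case/orP => [/eqP dt | dS].
    case: (set2_eq (ltnW hxy') o (etrans (esym ed) dt)) => -> -> /=; lia.
  have := SNC c d cS dS; rewrite ec ed crossingE ?(ltnW hxy) ?(ltnW hxy') //.
have := lam_bound FR FN.
rewrite cardsU1 (negbTE (_ : topc \notin S)) /=; first lia.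
by apply/negP => /Sch; apply/negP; exact: top_not_chord.
Qed.


Lemma crossing_refl c : is_chord c -> ~~ crossing c c.
Proof.
case/chordP => x [y [hxy [-> _]]]; rewrite crossingE //; lia.
Qed.

Section Delta.
Variable delta : {set {set 'I_n}}.
Hypothesis Dch : forall c, c \in delta -> is_chord c.
Hypothesis DNC : forall c d, c \in delta -> d \in delta -> ~~ crossing c d.

Lemma side_nc p q y z : side delta p q -> side delta y z -> (p < y < q)%N -> ((z < p) || (q < z))%N -> False.
Proof.
move=> spq syz hy hz.
have hpq : (p < q)%N by case/andP: hy => a b; exact: ltn_trans b.
have hzn := ltn_ord z; have hqn := ltn_ord q.
case/orP: spq => [|Pd].
  rewrite adj_lt //; move: hy hz hzn; lia.
case: (ltngtP y z) => hyz.
- case/orP: syz => [|Yd].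
    rewrite adj_lt //; move: hy hz; lia.
  have hqz : (q < z)%N by move: hy hz hyz; lia.
  have := DNC Pd Yd; rewrite crossingE //; move: hy hqz; lia.
- case/orP: syz => [|Yd].
    rewrite adj_sym adj_lt //; move: hy hz hqn; lia.
  have hzp : (z < p)%N by move: hy hz hyz; lia.
  rewrite setUC in Yd.
  have := DNC Yd Pd; rewrite crossingE //; move: hy hzp; lia.
- by move: hy hz; rewrite hyz; lia.
Qed.

Hypothesis Dcard : #|delta| = (n - 3)%N.

Lemma maximal c : is_chord c -> (forall d, d \in delta -> ~~ crossing c d && ~~ crossing d c) -> c \in delta.
Proof.
move=> cc hc; apply/negPn/negP => cn.
have := @chord_bound (c |: delta).
rewrite cardsU1 cn Dcard /=.
have -> : (1 + (n - 3) <= n - 3)%N = false by lia.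
move=> H; apply: notF; apply: H.
  by move=> d; rewrite !inE => /orP [/eqP -> //| /Dch].
move=> d e; rewrite !inE => /orP [/eqP -> | dd] /orP [/eqP -> | ed].
- exact: crossing_refl.
- by case/andP: (hc e ed).
- by case/andP: (hc d dd).
- exact: DNC.
Qed.

Lemma side_in x y : [set x; y] \in delta -> side delta x y.
Proof. by move=> h; rewrite /side h orbT. Qed.

Lemma Klem p q : (p.+1 < q)%N -> side delta p q ->
  exists r : 'I_n, [/\ (p < r < q)%N, side delta p r & side delta r q].
Proof.
move=> hpq spq.
have hp1 : (p.+1 < n)%N by have := ltn_ord q; lia.
pose x0 := Ordinal hp1.
have Px0 : (p < x0 < q)%N && side delta p x0.
  by rewrite /side adj_lt /= ?eqxx //; apply/andP; split => //; lia.
case: (@arg_maxnP _ x0 (fun x => (p < x < q)%N && side delta p x) (fun x => nat_of_ord x) Px0)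
  => r /andP [hr spr] rmax.
exists r; split => //.
case: (boolP (q == r.+1 :> nat)) => hq.
  by rewrite /side adj_lt ?hq //; case/andP: hr.
apply: side_in; apply: maximal.
  apply/existsP; exists r; apply/existsP; exists q; rewrite eqxx /= adj_lt; last by case/andP: hr.
  by rewrite oeqE negb_or hq /=; move: hr; lia.
move=> d dd; case/chordP: (Dch dd) => x [y [hxy [ed _]]].
have sxy : side delta x y by apply: side_in; rewrite -ed.
have hrq : (r < q)%N by case/andP: hr.
rewrite ed !crossingE //.
apply/andP; split; apply/negP.
  move=> /and3P [a b c].
  apply: (side_nc spq sxy); move: hr a b c; lia.
move=> /and3P [a b c].
case: (ltngtP x p) => hxp.
- apply: (side_nc sxy spq); move: hr a b c hxp; lia.
- apply: (side_nc spr sxy); move: hr a b c hxp; lia.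
- have hxp' : x = p by apply/ord_inj.
  have := rmax y; rewrite -hxp' sxy andbT.
  have -> : (x < y < q)%N by move: hr a b c hxp; lia.
  move=> /(_ isT); move: b; lia.
Qed.
End Delta.

End Comb.

Local Open Scope ring_scope.
Section Exist.
Variable R : realFieldType.
Variable n' : nat.
Local Notation n := n'.+3.
Variable V : 'I_n -> 'rV[R]_2.
Hypothesis hccw : ccw_strictly_convex V.
Implicit Types (i j k p q v w : 'I_n) (x : 'rV[R]_2) (delta : {set {set 'I_n}}).

Lemma tri_mem delta t : (t \in triangles delta) = is_triangle delta t.
Proof. by rewrite mem_filter mem_enum andbT. Qed.

Lemma poly_half a : in_polygon V a ->
  (forall x y : 'I_n, nat_of_ord y = (nat_of_ord x).+1 -> 0 <= area (V x) (V y) a) /\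
  0 <= area (V ord_max) (V ord0) a.
Proof.
case=> w [w0 [w1 ->]]; split.
  move=> x y hy; rewrite area_combS //; apply: sumr_ge0 => i _.
  apply: mulr_ge0 => //; apply: (f_ge0 hccw); rewrite hy //; lia.
rewrite area_combS //; apply: sumr_ge0 => i _.
apply: mulr_ge0 => //; rewrite area_swap oppr_ge0; apply: (f_le0 hccw) => //.
have := ltn_ord i; rewrite /=; lia.
Qed.

Lemma in_tri_of p (r : 'I_n) q a : (p < r < q)%N ->
  0 <= area (V p) (V r) a -> 0 <= area (V r) (V q) a -> 0 <= area (V q) (V p) a ->
  in_tri V (p, r, q) a.
Proof.
move=> o h1 h2 h3; have [hpr hrq hpq] := ord3_neq o; have D := hccw o.
have hrp : r != p by rewrite eq_sym.
have hqr : q != r by rewrite eq_sym.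
have hqp : q != p by rewrite eq_sym.
rewrite /in_tri !bary_split // !eqxx ?(negbTE hpr) ?(negbTE hrq) ?(negbTE hpq).
rewrite ?(negbTE hrp) ?(negbTE hqr) ?(negbTE hqp) /=.
rewrite !mul1r !mul0r !addr0 !add0r; apply/and3P; split; (apply: divr_ge0; last exact: ltW D).
- by rewrite (area_cyc (V q)) (area_cyc a).
- by rewrite (area_cyc (V p)) (area_cyc a).
- by rewrite (area_cyc (V r)) (area_cyc a).
Qed.

Section D.
Variable delta : {set {set 'I_n}}.
Hypothesis hd : chordal_decomposition delta.
Variable a : 'rV[R]_2.
Hypothesis edges : forall x y : 'I_n, nat_of_ord y = (nat_of_ord x).+1 -> 0 <= area (V x) (V y) a.

Lemma exist_sub m : forall p q, (q - p <= m)%N -> (p.+1 < q)%N -> side delta p q ->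
  0 <= area (V q) (V p) a -> exists t, t \in triangles delta /\ in_tri V t a.
Proof.
case: hd => Dch Dcard DNC.
elim: m => [|m IH] p q hm hpq spq hqp; first by lia.
case: (Klem Dch DNC Dcard hpq spq) => r [hr spr srq].
case/andP: (hr) => hpr hrq.
case: (ltrP (area (V p) (V r) a) 0) => h1.
  have hpr1 : (p.+1 < r)%N.
    case: (ltngtP p.+1 r) => // e; first by lia.
    by have := edges (esym e); rewrite leNgt h1.
  apply: (IH p r) => //; first by lia.
  by rewrite area_swap oppr_ge0 ltW.
case: (ltrP (area (V r) (V q) a) 0) => h2.
  have hrq1 : (r.+1 < q)%N.
    case: (ltngtP r.+1 q) => // e; first by lia.
    by have := edges (esym e); rewrite leNgt h2.
  apply: (IH r q) => //; first by lia.
  by rewrite area_swap oppr_ge0 ltW.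
exists (p, r, q); split; last exact: in_tri_of.
by rewrite tri_mem /is_triangle hr spr srq spq.
Qed.
End D.

Lemma exist_tri delta a : chordal_decomposition delta -> in_polygon V a ->
  exists t, t \in triangles delta /\ in_tri V t a.
Proof.
move=> hd hp; case: (poly_half hp) => edges htop.
apply: (exist_sub hd edges (m := n) (p := ord0) (q := ord_max)) => //=.
by rewrite /side adj_lt //= eqxx.
Qed.
End Exist.

Lemma Fsum_const (R : realFieldType) m (V : 'I_m -> 'rV[R]_2) (s prev : seq (tri m)) v a b :
  (forall t, t \in s -> in_tri V t a -> bary V t v a = b) ->
  Fsum V prev s v a = if has (fun t => in_tri V t a) prev then 0
                      else if has (fun t => in_tri V t a) s then b else 0.
Proof.
elim: s prev => [|t s IH] prev H /=; first by case: has.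
rewrite IH; last by move=> t' ht'; apply: H; rewrite inE ht' orbT.
rewrite has_rcons.
case hp: (has _ prev); case ht: (in_tri V t a) => /=.
- by rewrite subrr add0r.
- by rewrite subrr add0r.
- by rewrite subr0 addr0 (H t (mem_head _ _) ht).
- by rewrite subrr add0r.
Qed.

Section Coord.
Variable R : realFieldType.
Variable n' : nat.
Local Notation n := n'.+3.
Variable V : 'I_n -> 'rV[R]_2.
Hypothesis hccw : ccw_strictly_convex V.
Variable delta : {set {set 'I_n}}.
Hypothesis hd : chordal_decomposition delta.

Lemma coord_eq t0 a v : t0 \in triangles delta -> in_tri V t0 a ->
  chordal_coord V delta a v = bary V t0 v a.
Proof.
case: hd => Dch Dcard DNC.
case: t0 => [[i0 j0] k0] ht0 it0.
move: (ht0); rewrite tri_mem => /and4P [o0 s1 s2 s3].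
have H : forall t, t \in [seq t <- triangles delta | tri_has t v] -> in_tri V t a ->
    bary V t v a = bary V (i0, j0, k0) v a.
  move=> [[i j] k]; rewrite mem_filter tri_mem => /andP [_ /and4P [o t1 t2 t3]] it.
  exact: (consist hccw (side_sym delta) (side_nc DNC) o o0 t1 t2 t3 s1 s2 s3 it it0).
rewrite /chordal_coord (Fsum_const _ H) /=.
case: ifP => // hn.
have : ~~ tri_has (i0, j0, k0) v.
  apply/negP => th; move/negP: hn; apply; apply/hasP; exists (i0, j0, k0) => //.
  by rewrite mem_filter th ht0.
rewrite /tri_has !negb_or => /and3P [a1 a2 a3].
have [h1 h2 h3] := ord3_neq o0.
by rewrite (negbTE a1) (negbTE a2) (negbTE a3).
Qed.

Lemma coord_props a : in_polygon V a ->
  (forall v, 0 <= chordal_coord V delta a v) /\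
  \sum_v chordal_coord V delta a v = 1 /\
  \sum_v chordal_coord V delta a v *: V v = a.
Proof.
move=> hp; case: (exist_tri hccw hd hp) => [[[i j] k] [ht it]].
move: (ht); rewrite tri_mem => /and4P [o _ _ _].
have [h1 h2 h3] := ord3_neq o; have hD := D_neq0 hccw o.
have [a1 a2 a3] := in_tri_area hccw o it; have D := hccw o.
split; last split.
- move=> v; rewrite (coord_eq v ht it) bary_split //.
  by rewrite !addr_ge0 // mulr_ge0 // divr_ge0 // ltW.
- under eq_bigr => v _ do rewrite (coord_eq v ht it).
  exact: bary_sumV.
- under eq_bigr => v _ do rewrite (coord_eq v ht it).
  exact: bary_sumVV.
Qed.
End Coord.

Section Dih.
Variable n' : nat.
Local Notation n := n'.+3.
Implicit Types (i j k l s x y : 'I_n).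

Lemma valD x y : nat_of_ord (x + y) = ((x + y) %% n)%N.
Proof. by []. Qed.

Lemma valN x : nat_of_ord (- x) = ((n - x) %% n)%N.
Proof. by []. Qed.

Lemma val1 : nat_of_ord (1 : 'I_n) = 1%N.
Proof. by []. Qed.

Lemma adjZ i j : adj i j = (j == i + 1) || (i == j + 1).
Proof. by rewrite /adj !oeqE !valD val1 !addn1 (eq_sym (nat_of_ord j)) (eq_sym (nat_of_ord i)). Qed.

Lemma two_neq0 : (1 + 1 : 'I_n) != 0.
Proof. by rewrite oeqE valD val1 modn_small. Qed.


Lemma dih_adj (g : {perm 'I_n}) : g \in dihedral n -> forall i j, adj (g i) (g j) = adj i j.
Proof.
rewrite inE => /forallP H i j.
by have /forallP /(_ j) /eqP -> := H i.
Qed.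

Lemma dih_char (g : {perm 'I_n}) : g \in dihedral n ->
  (forall i, g i = g 0 + i) \/ (forall i, g i = g 0 - i).
Proof.
move=> hg; have A := dih_adj hg.
pose e := g 1 - g 0.
have he : e = 1 \/ e = -1.
  have := A 0 1; rewrite !adjZ add0r eqxx /= => /orP [/eqP h|/eqP h].
    by left; rewrite /e h addrAC subrr add0r.
  by right; rewrite /e h opprD addrA subrr add0r.
have key : forall k : nat, g (k%:R) = g 0 + e *+ k /\ g (k.+1%:R) = g 0 + e *+ k.+1.
  elim=> [|k [IH1 IH2]].
    by rewrite mulr0n addr0 mulr1n /e addrC subrK.
  split => //.
  have hadj : adj (k.+1%:R : 'I_n) k.+2%:R by rewrite adjZ [k.+2%:R]mulrS addrC eqxx.
  have := A (k.+1%:R) (k.+2%:R); rewrite hadj adjZ => h.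
  have gk2 : g k.+2%:R = g k.+1%:R + 1 \/ g k.+2%:R = g k.+1%:R - 1.
    case/orP: h => /eqP h; [left | right]; by rewrite h ?addrK.
  have two : (k.+2%:R : 'I_n) != k%:R.
    by rewrite !mulrS addrA -[X in _ != X]add0r (inj_eq (addIr _)) two_neq0.
  have contra : g k.+2%:R = g k%:R -> False.
    by move/perm_inj => h'; move: two; rewrite h' eqxx.
  case: he => he; rewrite he in IH1 IH2 *; case: gk2 => gk2.
  - by rewrite gk2 IH2 !mulrS; ring.
  - by exfalso; apply: contra; rewrite gk2 IH2 IH1 !mulrS; ring.
  - by exfalso; apply: contra; rewrite gk2 IH2 IH1 !mulrS; ring.
  - by rewrite gk2 IH2 !mulrS; ring.
case: he => he; [left | right] => i; rewrite -[i in LHS]natr_Zp (key i).1 he.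
  by rewrite natr_Zp.
by rewrite mulNrn natr_Zp.
Qed.

Lemma adjD i j : adj i j = (j - i == 1) || (i - j == 1).
Proof. by rewrite adjZ !subr_eq addrC (addrC 1 j). Qed.

Lemma rotf_inj s : injective (fun i : 'I_n => s + i).
Proof. exact: addrI. Qed.
Lemma reff_inj s : injective (fun i : 'I_n => s - i).
Proof. by move=> x y /addrI /oppr_inj. Qed.

Definition dmap (p : 'I_n * bool) : {perm 'I_n} :=
  if p.2 then perm (@reff_inj p.1) else perm (@rotf_inj p.1).

Lemma dmap_in p : dmap p \in dihedral n.
Proof.
rewrite inE; apply/forallP => i; apply/forallP => j; case: p => s [] /=; rewrite !permE !adjD.
  have -> : (s - j) - (s - i) = i - j by ring.
  have -> : (s - i) - (s - j) = j - i by ring.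
  by rewrite orbC.
have -> : (s + j) - (s + i) = j - i by ring.
by have -> : (s + i) - (s + j) = i - j by ring.
Qed.

Lemma dmap_inj : injective dmap.
Proof.
move=> [s b] [s' b'] h.
have h0 := congr1 (fun g : {perm 'I_n} => g 0) h.
have h1 := congr1 (fun g : {perm 'I_n} => g 1) h.
move: h0 h1 h; case: b; case: b' => /= e0 e1 _; rewrite !permE /= ?subr0 ?addr0 in e0 e1;
  rewrite ?e0 // in e1 *; exfalso; move/eqP: two_neq0; apply.
- by apply: (@addrI _ (s' - 1)); rewrite addr0 [RHS]e1; ring.
- by apply: (@addrI _ (s' - 1)); rewrite addr0 -[RHS]e1; ring.
Qed.

Lemma dih_eq : dihedral n = dmap @: setT.
Proof.
apply/setP => g; apply/idP/imsetP => [hg | [p _ ->]]; last exact: dmap_in.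
case: (dih_char hg) => H.
  by exists (g 0, false) => //; apply/permP => i; rewrite /dmap permE H.
by exists (g 0, true) => //; apply/permP => i; rewrite /dmap permE H.
Qed.

Lemma card_dih : #|dihedral n| = (2 * n)%N.
Proof.
rewrite dih_eq card_imset; last exact: dmap_inj.
by rewrite cardsT card_prod card_ord card_bool mulnC.
Qed.

Definition cyc (a b c : nat) := [|| (a < b < c)%N, (b < c < a)%N | (c < a < b)%N].

Lemma crossX i j k l : i != j -> k != l ->
  crossing [set i; j] [set k; l] || crossing [set k; l] [set i; j] =
  [&& k != i, k != j, l != i, l != j & cyc i k j != cyc i l j].
Proof.
rewrite /cyc !oeqE => hij hkl.
case: (ltngtP i j) => h1; last by move: hij; rewrite h1 eqxx.
- case: (ltngtP k l) => h2; last by move: hkl; rewrite h2 eqxx.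
  + rewrite !crossingE //; apply/idP/idP; lia.
  + rewrite [[set k; l]]setUC !crossingE //; apply/idP/idP; lia.
- rewrite [[set i; j]]setUC.
  case: (ltngtP k l) => h2; last by move: hkl; rewrite h2 eqxx.
  + rewrite !crossingE //; apply/idP/idP; lia.
  + rewrite [[set k; l]]setUC !crossingE //; apply/idP/idP; lia.
Qed.

Lemma modD_if s x : ((nat_of_ord (s + x : 'I_n)) = if (s + x < n)%N then (s + x)%N else (s + x - n)%N).
Proof.
rewrite valD; case: ltnP => h; first by rewrite modn_small.
have hs := ltn_ord s; have hx := ltn_ord x.
rewrite -{1}(subnK h) modnDr modn_small //; lia.
Qed.

Lemma modN_if x : nat_of_ord (- x : 'I_n) = if (nat_of_ord x == 0)%N then 0%N else (n - x)%N.
Proof.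
rewrite valN; case: eqP => h; first by rewrite h modnn.
have hx := ltn_ord x; rewrite modn_small //; lia.
Qed.

Lemma cyc_add s (a b c : 'I_n) : a != b -> b != c -> a != c ->
  cyc (s + a)%R (s + b)%R (s + c)%R = cyc a b c.
Proof.
rewrite !oeqE /cyc !modD_if => h1 h2 h3.
have := ltn_ord a; have := ltn_ord b; have := ltn_ord c; have := ltn_ord s.
case: ifP => ?; case: ifP => ?; case: ifP => ? ? ? ? ?; apply/idP/idP; lia.
Qed.

Lemma cyc_opp (a b c : 'I_n) : a != b -> b != c -> a != c ->
  cyc (- a)%R (- b)%R (- c)%R = cyc c b a.
Proof.
rewrite !oeqE /cyc !modN_if => h1 h2 h3.
have := ltn_ord a; have := ltn_ord b; have := ltn_ord c.
case: ifP => ?; case: ifP => ?; case: ifP => ? ? ? ?; apply/idP/idP; lia.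
Qed.

Lemma cyc_rev (a b c : nat) : a != b -> b != c -> a != c -> cyc c b a = ~~ cyc a b c.
Proof. rewrite /cyc => h1 h2 h3; apply/idP/idP; lia. Qed.

Lemma dih_cyc (g : {perm 'I_n}) : g \in dihedral n ->
  (forall a b c, a != b -> b != c -> a != c -> cyc (g a) (g b) (g c) = cyc a b c) \/
  (forall a b c, a != b -> b != c -> a != c -> cyc (g a) (g b) (g c) = cyc c b a).
Proof.
case/dih_char => H; [left|right] => a b c h1 h2 h3; rewrite (H a) (H b) (H c).
  exact: cyc_add.
rewrite cyc_add ?cyc_opp //; by rewrite (inj_eq (@oppr_inj _)).
Qed.

Lemma imset2 (g : {perm 'I_n}) i j : g @: [set i; j] = [set g i; g j].
Proof. by rewrite imsetU1 imset_set1. Qed.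

Lemma cross_inv (g : {perm 'I_n}) i j k l : g \in dihedral n -> i != j -> k != l ->
  crossing [set g i; g j] [set g k; g l] || crossing [set g k; g l] [set g i; g j] =
  crossing [set i; j] [set k; l] || crossing [set k; l] [set i; j].
Proof.
move=> hg hij hkl.
rewrite !crossX ?(inj_eq (@perm_inj _ g)) //.
case: (boolP [&& k != i, k != j, l != i & l != j]) => [/and4P [a1 a2 a3 a4] | hn]; last first.
  by move: hn; case: (k != i); case: (k != j); case: (l != i); case: (l != j).
rewrite a1 a2 a3 a4 /=.
have a1' : i != k by rewrite eq_sym.
have a3' : i != l by rewrite eq_sym.
case: (dih_cyc hg) => H; rewrite !H //.
rewrite (@cyc_rev i k j) // (@cyc_rev i l j) //; by case: (cyc i k j); case: (cyc i l j).
Qed.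

Lemma act_chordal (delta : {set {set 'I_n}}) (g : {perm 'I_n}) : g \in dihedral n ->
  chordal_decomposition delta -> chordal_decomposition (act_decomp delta g).
Proof.
move=> hg [Dch Dcard DNC]; split.
- move=> c' /imsetP [c cd ->]; case/chordP: (Dch c cd) => x [y [hxy [-> na]]].
  rewrite imset2; apply/existsP; exists (g x); apply/existsP; exists (g y).
  by rewrite eqxx (inj_eq (@perm_inj _ g)) (dih_adj hg) na lt_neq.
- by rewrite card_imset // ; exact: imset_inj (@perm_inj _ g).
- move=> c' d' /imsetP [c cd ->] /imsetP [d dd ->].
  case/chordP: (Dch c cd) => x [y [hxy [ec _]]].
  case/chordP: (Dch d dd) => z [w [hzw [ed _]]].
  have e := cross_inv hg (lt_neq hxy) (lt_neq hzw).
  have n1 := DNC _ _ cd dd; have n2 := DNC _ _ dd cd.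
  rewrite ec ed in n1 n2; rewrite ec ed !imset2.
  apply/negP => hc; move: e; by rewrite hc (negbTE n1) (negbTE n2).
Qed.
End Dih.

Theorem theorem7p17 (R : realFieldType) (n : nat) (V : 'I_n -> 'rV[R]_2)
    (delta : {set {set 'I_n}}) :
  (3 <= n)%N ->
  ccw_strictly_convex V ->
  chordal_decomposition delta ->
  forall a : 'rV[R]_2, in_polygon V a ->
    (forall v : 'I_n, 0 <= kappa V delta a v <= 1) /\
    \sum_(v < n) kappa V delta a v = 1 /\
    a = \sum_(v < n) kappa V delta a v *: V v.
Proof.
case: n V delta => [|[|[|n']]] V delta //.
move=> _ hccw hd a hp.
have P := fun g (hg : g \in dihedral _) => coord_props hccw (act_chordal hg hd) hp.
have N0 : ((2 * n'.+3)%:R : R) != 0 by rewrite pnatr_eq0.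
have ge0 : forall v, 0 <= kappa V delta a v.
  move=> v; rewrite /kappa mulr_ge0 ?invr_ge0 ?ler0n //.
  by apply: sumr_ge0 => g hg; apply: (P g hg).1.
have S1 : \sum_(v < n'.+3) kappa V delta a v = 1.
  rewrite /kappa -mulr_sumr exchange_big /=.
  under eq_bigr => g hg do rewrite (P g hg).2.1.
  by rewrite sumr_const card_dih mulVf.
split; last split => //.
  move=> v; rewrite ge0 /=; rewrite -S1 (bigD1 v) //= lerDl.
  by apply: sumr_ge0 => w _; apply: ge0.
rewrite /kappa.
under eq_bigr => v _ do rewrite -scalerA scaler_suml.
rewrite -scaler_sumr exchange_big /=.
under eq_bigr => g hg do rewrite (P g hg).2.2.
by rewrite sumr_const card_dih -scaler_nat scalerA mulVf // scale1r.
Qed.
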